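(* Let $X\sim p$ with $\mathrm{Var}[X]<\infty$, and let $\tau:=-\widetilde{\mathcal{T}}\,\mathrm{id}$, where $\mathrm{id}$ is the identity function. Then $$\mathrm{Var}[X]=\|\tau\|_{L^1(p)}\le\|w\|_{L^1(p)}$$ for every weight $w$ such that $C(p,w)=1$.
   Context: Let $-\infty\le a<b\le\infty$, $p\in L^1(]a,b[)$ with $p>0$ a.e. and $\int_a^b p=1$. A weight is a function $w\in L^1_{\mathrm{loc}}(]a,b[)$ with $w>0$ a.e. and $pw\in L^1_{\mathrm{loc}}(]a,b[)$. Write $\mathbb{E}_p[f]=\int_a^b fp$. $H^1(p,w)=\{h\in L^2(p): h$ locally absolutely continuous, $h'\in L^2(pw)\}$, and $C(p,w)\in[0,\infty]$ is the smallest $C$ with $\mathrm{Var}_p[h]\le C\,\mathbb{E}_p[|h'|^2w]$ for all $h\in H^1(p,w)$. For $h\in L^1(p)$, $\widetilde{\mathcal{T}} h(x)=\frac{1}{p(x)}\int_a^x(h-\mathbb{E}_p[h])\,p$. *)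

(* Defs.v *)
From HB Require Import structures.
From mathcomp Require Import all_boot all_order all_algebra.
From mathcomp Require Import all_classical all_reals all_analysis.
Set Implicit Arguments. Unset Strict Implicit. Unset Printing Implicit Defensive.
Import Order.TTheory GRing.Theory Num.Theory.
Local Open Scope classical_set_scope.
Local Open Scope ring_scope.

Section Defs.
Variable R : realType.
Notation mu := (@lebesgue_measure R).

Definition oitv (a b : \bar R) : set R := [set x : R | (a < x%:E)%E /\ (x%:E < b)%E].

Definition density (a b : \bar R) (p : R -> R) : Prop :=
  [/\ mu.-integrable (oitv a b) (fun x => (p x)%:E),
      {ae mu, forall x, oitv a b x -> 0 < p x} &
      (\int[mu]_(x in oitv a b) (p x)%:E = 1)%E].

Definition loc_integrable (a b : \bar R) (f : R -> R) : Prop :=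
  measurable_fun (oitv a b) f /\
  forall x y : R, oitv a b x -> oitv a b y ->
    mu.-integrable `[x, y] (fun t => (f t)%:E).

Definition weight (a b : \bar R) (p w : R -> R) : Prop :=
  [/\ loc_integrable a b w,
      {ae mu, forall x, oitv a b x -> 0 < w x} &
      loc_integrable a b (fun x => p x * w x)].

Definition L2p (a b : \bar R) (p h : R -> R) : Prop :=
  measurable_fun (oitv a b) h /\
  (\int[mu]_(x in oitv a b) ((h x) ^+ 2 * p x)%:E < +oo)%E.

Definition Ep (a b : \bar R) (p f : R -> R) : R :=
  fine (\int[mu]_(x in oitv a b) (f x * p x)%:E).

Definition Varp (a b : \bar R) (p h : R -> R) : \bar R :=
  \int[mu]_(x in oitv a b) ((h x - Ep a b p h) ^+ 2 * p x)%:E.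

(* h in H^1(p,w) with (a.e.) derivative g: h in L^2(p), h locally absolutely
   continuous with h' = g, i.e. g in L^1_loc and h y - h x = int_x^y g, and
   h' = g in L^2(p w). *)
Definition H1 (a b : \bar R) (p w h g : R -> R) : Prop :=
  [/\ L2p a b p h,
      loc_integrable a b g,
      (forall x y : R, oitv a b x -> oitv a b y -> x <= y ->
         h y - h x = \int[mu]_(t in `[x, y]) g t) &
      (\int[mu]_(x in oitv a b) ((g x) ^+ 2 * (p x * w x))%:E < +oo)%E].

Definition Dirichlet (a b : \bar R) (p w g : R -> R) : \bar R :=
  \int[mu]_(x in oitv a b) (`|g x| ^+ 2 * w x * p x)%:E.

Definition Cpw (a b : \bar R) (p w : R -> R) : \bar R :=
  ereal_inf [set C : \bar R | (0 <= C)%E /\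
    forall h g, H1 a b p w h g -> (Varp a b p h <= C * Dirichlet a b p w g)%E].

Definition Ttilde (a b : \bar R) (p h : R -> R) (x : R) : R :=
  (p x)^-1 * fine (\int[mu]_(t in oitv a x%:E) ((h t - Ep a b p h) * p t)%:E).

Definition L1norm (a b : \bar R) (p f : R -> R) : \bar R :=
  \int[mu]_(x in oitv a b) (`|f x| * p x)%:E.

End Defs.

(* Main.v *)
Require Import Defs.
From HB Require Import structures.
From mathcomp Require Import all_boot all_order all_algebra.
From mathcomp Require Import all_classical all_reals all_analysis.
From mathcomp Require Import measurable_realfun.
From mathcomp.algebra_tactics Require Import ring lra.
Import Order.TTheory GRing.Theory Num.Theory.
Local Open Scope classical_set_scope.
Local Open Scope ring_scope.
Set Implicit Arguments. Unset Strict Implicit.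

Lemma moitv (R : realType) (a b : \bar R) : measurable (oitv a b : set (measurableTypeR R)).
Proof.
have := @measurable_realfun.EFin_measurable R setT measurableT _ (measurable_realfun.emeasurable_itv `]a, b[).
rewrite setTI; congr measurable; apply/seteqP; split => x /=;
  by rewrite /oitv /= in_itv /= => /andP.
Qed.

Lemma ae_abs (R : realType) (a b : \bar R) (p f : R -> R) (D : set R) :
  measurable D -> D `<=` oitv a b -> measurable_fun D f -> measurable_fun D p ->
  {ae (@lebesgue_measure R), forall x, oitv a b x -> 0 < p x} ->
  (\int[@lebesgue_measure R]_(x in D) (f x * p x)%:E =
   \int[@lebesgue_measure R]_(x in D) (f x * `|p x|)%:E)%E.
Proof.
move=> mD DI mf mp Hp.
apply: ae_eq_integral => //.
- by apply/measurable_EFinP; exact: measurable_funM.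
- apply/measurable_EFinP; apply: measurable_funM => //.
  exact: measurableT_comp.
- apply: (@filterS _ _ (@ae_filter_ringOfSetsType _ _ _ (@lebesgue_measure R)) _ _ _ Hp) => x Hx Dx.
  by rewrite gtr0_norm // Hx //; exact: DI.
Qed.

Lemma mX2 (R : realType) (D : set R) : measurable_fun D (fun x : R => x ^+ 2).
Proof.
have h := (@measurable_funX _ _ _ D (fun x => x) 2).
apply: h; exact: measurable_id.
Qed.

Lemma measurable_inv (R : realType) : measurable_fun [set: R] (fun x : R => x^-1).
Proof.
have -> : [set: R] = [set~ 0] `|` [set 0] by rewrite setUC setUv.
apply/measurable_funU => //; first exact: measurableC.
split; last exact: measurable_fun_set1.
apply: open_continuous_measurable_fun.
  by rewrite openC; apply: accessible_closed_set1; exact: hausdorff_accessible.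
move=> x /set_mem /= x0.
by apply: inv_continuous; apply/eqP.
Qed.

Local Notation leb := (@lebesgue_measure _).

Lemma P_int (R : realType) (a b : \bar R) (p : R -> R) :
  leb.-integrable (oitv a b) (fun x => (p x)%:E) ->
  leb.-integrable (oitv a b) (fun x => (`|p x|)%:E).
Proof. by move=> h; exact: (integrable_norm h). Qed.

Lemma P_1 (R : realType) (a b : \bar R) (p : R -> R) :
  density a b p -> (\int[leb]_(x in oitv a b) (`|p x|)%:E = 1)%E.
Proof.
case=> Hi Hp H1.
have mp : measurable_fun (oitv a b) p.
  by move/integrableP: Hi => [/measurable_EFinP].
transitivity (\int[leb]_(x in oitv a b) (1 * `|p x|)%:E)%E.
  by apply: eq_integral => x _; rewrite mul1r.
rewrite -(@ae_abs R a b p (fun=> 1) (oitv a b)) //; last exact: moitv.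
by rewrite -H1; apply: eq_integral => x _; rewrite mul1r.
Qed.

Lemma dens_mp (R : realType) (a b : \bar R) (p : R -> R) :
  density a b p -> measurable_fun (oitv a b) p.
Proof. by case=> Hi _ _; move/integrableP: Hi => [/measurable_EFinP]. Qed.

Lemma x2P (R : realType) (a b : \bar R) (p : R -> R) :
  density a b p -> L2p a b p id ->
  (\int[leb]_(x in oitv a b) (x ^+ 2 * `|p x|)%:E < +oo)%E.
Proof.
move=> hd [_ h2]; have [_ Hp _] := hd.
rewrite -(@ae_abs R a b p (fun x => x ^+ 2) (oitv a b)) //.
- exact: moitv.
- exact: dens_mp.
Qed.

Lemma xP_int (R : realType) (a b : \bar R) (p : R -> R) :
  density a b p -> L2p a b p id ->
  leb.-integrable (oitv a b) (fun x => (x * `|p x|)%:E).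
Proof.
move=> hd h2; have mI := @moitv R a b; have mp := dens_mp hd.
have mP : measurable_fun (oitv a b) (fun x => `|p x|) by exact: measurableT_comp.
apply/integrableP; split.
  by apply/measurable_EFinP; exact: measurable_funM.
under eq_integral do rewrite abse_EFin.
apply: (@le_lt_trans _ _ (\int[leb]_(x in oitv a b) ((`|p x|)%:E + (x ^+ 2 * `|p x|)%:E))%E).
  apply: ge0_le_integral => //.
  - apply/measurable_EFinP; apply: measurableT_comp => //; exact: measurable_funM.
  - apply: emeasurable_funD; apply/measurable_EFinP => //; apply: measurable_funM => //.
  - move=> x _; rewrite -EFinD lee_fin normrM normr_id.
    have key : `|x| <= 1 + x ^+ 2.
      have : `|x| ^+ 2 = x ^+ 2 by rewrite real_normK ?num_real.
      have := normr_ge0 x; nra.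
    by have := ler_wpM2r (normr_ge0 (p x)) key; rewrite mulrDl mul1r.
rewrite ge0_integralD //.
- rewrite P_1 //; apply: lte_add_pinfty; [exact: ltry | exact: (x2P hd h2)].
- by apply/measurable_EFinP.
- by move=> x _; rewrite lee_fin mulr_ge0 // sqr_ge0.
- apply/measurable_EFinP => //; apply: measurable_funM => //; exact: mX2.
Qed.

Lemma meanE (R : realType) (a b : \bar R) (p : R -> R) :
  density a b p -> L2p a b p id ->
  (\int[leb]_(x in oitv a b) (x * `|p x|)%:E = (Ep a b p id)%:E)%E.
Proof.
move=> hd h2; have [_ Hp _] := hd.
rewrite /Ep (@ae_abs R a b p id (oitv a b)) //; last 2 first.
- exact: moitv.
- exact: dens_mp.
rewrite fineK //; apply: integrable_fin_num => //; first exact: moitv.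
exact: xP_int.
Qed.

Lemma shift_int (R : realType) (a b : \bar R) (p : R -> R) (c : R) :
  density a b p -> L2p a b p id ->
  leb.-integrable (oitv a b) (fun x => ((x - c) * `|p x|)%:E).
Proof.
move=> hd h2; have mI := moitv a b.
have hP := P_int (let: And3 h _ _ := hd in h).
have hc : leb.-integrable (oitv a b) (fun x => (c * `|p x|)%:E).
  move: (integrableZl mI c hP); apply: (eq_integrable mI) => x _ /=.
  by rewrite EFinM.
have h := integrableB mI (xP_int hd h2) hc.
move: h; apply: (eq_integrable mI) => x _ /=.
by rewrite -EFinB mulrBl.
Qed.

Lemma shiftE (R : realType) (a b : \bar R) (p : R -> R) (c : R) :
  density a b p -> L2p a b p id ->
  (\int[leb]_(x in oitv a b) ((x - c) * `|p x|)%:E = (Ep a b p id - c)%:E)%E.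
Proof.
move=> hd h2; have mI := moitv a b.
have hP := P_int (let: And3 h _ _ := hd in h).
transitivity (\int[leb]_(x in oitv a b) ((x * `|p x|)%:E - (c * `|p x|)%:E))%E.
  by apply: eq_integral => x _; rewrite -EFinB mulrBl.
rewrite integralB_EFin //; last 2 first.
- exact: xP_int.
- move: (integrableZl mI c hP); apply: (eq_integrable mI) => x _ /=.
  by rewrite EFinM.
rewrite meanE //.
transitivity ((Ep a b p id)%:E - c%:E * \int[leb]_(x in oitv a b) (`|p x|)%:E)%E.
  by congr (_ - _)%E; rewrite -integralZl //; apply: eq_integral => x _; rewrite EFinM.
by rewrite P_1 // mule1.
Qed.

Lemma mean_in (R : realType) (a b : \bar R) (p : R -> R) :
  (a < b)%E -> density a b p -> L2p a b p id ->
  (a <= (Ep a b p id)%:E <= b)%E.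
Proof.
move=> ab hd h2; apply/andP; split.
- case: a ab hd h2 => [r| |] ab hd h2; last exact: leNye.
  + have : (0 <= \int[leb]_(x in oitv r%:E b) ((x - r) * `|p x|)%:E)%E.
      apply: integral_ge0 => x [rx _]; rewrite lee_fin mulr_ge0 //.
      by rewrite subr_ge0 -lee_fin; exact: ltW.
    by rewrite shiftE // lee_fin subr_ge0.
  + by move: ab; rewrite ltNge leey.
- case: b ab hd h2 => [r| |] ab hd h2; first last.
  + by move: ab; rewrite ltNge leNye.
  + exact: leey.
  have : (\int[leb]_(x in oitv a r%:E) ((x - r) * `|p x|)%:E <= 0)%E.
    have -> : (\int[leb]_(x in oitv a r%:E) ((x - r) * `|p x|)%:E =
      \int[leb]_(x in oitv a r%:E) (- ((r - x) * `|p x|)%:E))%E.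
      by apply: eq_integral => x _; rewrite -EFinN -mulNr opprB.
    rewrite integral_ge0N; first by rewrite oppe_le0; apply: integral_ge0 => x [_ xr];
      rewrite lee_fin mulr_ge0 // subr_ge0 -lee_fin; exact: ltW.
    move=> x [_ xr]; rewrite lee_fin mulr_ge0 // subr_ge0 -lee_fin; exact: ltW.
  by rewrite shiftE // lee_fin subr_le0.
Qed.

Definition Pf (R : realType) (a b : \bar R) (p : R -> R) : R -> R :=
  fun t => if t \in oitv a b then `|p t| else 0.

Definition cond (R : realType) (a b : \bar R) (m x t : R) : bool :=
  [&& x \in oitv a b, t \in oitv a b &
     ((t < x) && (x < m)) || ((m <= x) && (x <= t))].

Definition Kf (R : realType) (a b : \bar R) (p : R -> R) (m : R)
  (z : measurableTypeR R * measurableTypeR R) : \bar R :=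
  if cond a b m z.1 z.2 then (`|z.2 - m| * Pf a b p z.2)%:E else 0%E.

Lemma mem_mfun (R : realType) (D : set (measurableTypeR R)) :
  measurable D -> measurable_fun setT (fun x => x \in D).
Proof.
move=> mD; apply: (measurable_fun_bool true); rewrite setTI.
rewrite (_ : _ @^-1` _ = D) //; apply/seteqP; split => x /=.
- by move/set_mem.
- by move/mem_set.
Qed.

Lemma mPf (R : realType) (a b : \bar R) (p : R -> R) :
  density a b p -> measurable_fun setT (Pf a b p).
Proof.
move=> hd; apply: measurable_fun_if => //.
- exact: mem_mfun (moitv a b).
- rewrite setTI (_ : _ @^-1` _ = oitv a b).
    exact: measurableT_comp (dens_mp hd).
  by apply/seteqP; split => x /=; [move/set_mem | move/mem_set].
Qed.

Lemma mKf (R : realType) (a b : \bar R) (p : R -> R) (m : R) :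
  density a b p -> measurable_fun setT (Kf a b p m).
Proof.
move=> hd.
have ms : measurable_fun [set: measurableTypeR R * measurableTypeR R] (snd : _ -> R).
  exact: measurable_snd.
have mf : measurable_fun [set: measurableTypeR R * measurableTypeR R] (fst : _ -> R).
  exact: measurable_fst.
have mc : measurable_fun [set: measurableTypeR R * measurableTypeR R] (fun=> m : R).
  exact: measurable_cst.
apply: measurable_fun_ifT.
- have mI := mem_mfun (moitv a b).
  apply: measurable_and; first exact: measurableT_comp mI measurable_fst.
  apply: measurable_and; first exact: measurableT_comp mI measurable_snd.
  apply: measurable_or; apply: measurable_and.
  + exact: measurable_fun_ltr ms mf.
  + exact: measurable_fun_ltr mf mc.
  + exact: measurable_fun_ler mc mf.
  + exact: measurable_fun_ler mf ms.
- apply/measurable_EFinP; apply: measurable_funM.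
  + apply: measurableT_comp => //; exact: measurable_funB ms mc.
  + exact: measurableT_comp (mPf hd) ms.
- exact: measurable_cst.
Qed.

Lemma Kf_ge0 (R : realType) (a b : \bar R) (p : R -> R) (m : R) z :
  (0 <= Kf a b p m z)%E.
Proof.
rewrite /Kf; case: ifP => // _; rewrite lee_fin mulr_ge0 //.
by rewrite /Pf; case: ifP.
Qed.

Lemma Kf_tonelli (R : realType) (a b : \bar R) (p : R -> R) (m : R) :
  density a b p ->
  (\int[leb]_x \int[leb]_t Kf a b p m (x, t) =
   \int[leb]_t \int[leb]_x Kf a b p m (x, t))%E.
Proof.
move=> hd; apply: fubini_tonelli; first exact: mKf.
exact: Kf_ge0.
Qed.

Lemma leb_sandwich (R : realType) (u v : R) (S : set (measurableTypeR R)) :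
  u <= v -> measurable S -> `]u, v[%classic `<=` S -> S `<=` `[u, v]%classic ->
  leb S = (v - u)%:E.
Proof.
move=> uv mS h1 h2.
have E1 : leb (`]u, v[%classic : set (measurableTypeR R)) = (v - u)%:E.
  rewrite lebesgue_measure_itv /= lte_fin.
  move: uv; rewrite le_eqVlt => /predU1P[->|uv]; first by rewrite ltxx subrr.
  by rewrite uv EFinB.
have E2 : leb (`[u, v]%classic : set (measurableTypeR R)) = (v - u)%:E.
  rewrite lebesgue_measure_itv /= lte_fin.
  move: uv; rewrite le_eqVlt => /predU1P[->|uv]; first by rewrite ltxx subrr.
  by rewrite uv EFinB.
apply/eqP; rewrite eq_le; apply/andP; split.
- by rewrite -E2; apply: le_measure => //; rewrite inE.
- by rewrite -E1; apply: le_measure => //; rewrite inE.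
Qed.

Lemma mcond (R : realType) (a b : \bar R) (m : R) :
  measurable_fun [set: measurableTypeR R * measurableTypeR R]
    (fun z => cond a b m z.1 z.2).
Proof.
have ms : measurable_fun [set: measurableTypeR R * measurableTypeR R] (snd : _ -> R).
  exact: measurable_snd.
have mf : measurable_fun [set: measurableTypeR R * measurableTypeR R] (fst : _ -> R).
  exact: measurable_fst.
have mc : measurable_fun [set: measurableTypeR R * measurableTypeR R] (fun=> m : R).
  exact: measurable_cst.
have mI := mem_mfun (moitv a b).
apply: measurable_and; first exact: measurableT_comp mI measurable_fst.
apply: measurable_and; first exact: measurableT_comp mI measurable_snd.
apply: measurable_or; apply: measurable_and.
+ exact: measurable_fun_ltr ms mf.
+ exact: measurable_fun_ltr mf mc.
+ exact: measurable_fun_ler mc mf.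
+ exact: measurable_fun_ler mf ms.
Qed.

Lemma mSt (R : realType) (a b : \bar R) (m t : R) :
  measurable [set x : measurableTypeR R | cond a b m x t].
Proof.
have h := measurable_fun_pair1 t (mcond a b m).
by have := h measurableT [set true] I; rewrite setTI; congr measurable.
Qed.

Lemma inner_x (R : realType) (a b : \bar R) (p : R -> R) (m t : R) :
  (a <= m%:E <= b)%E ->
  (\int[leb]_x Kf a b p m (x, t) =
   if t \in oitv a b then ((t - m) ^+ 2 * `|p t|)%:E else 0)%E.
Proof.
move=> /andP[am mb].
case: (boolP (t \in oitv a b)) => tI; last first.
  rewrite -[RHS](integral0 leb setT); apply: eq_integral => x _.
  by rewrite /Kf /cond (negbTE tI) andbF.
pose S := [set x : measurableTypeR R | cond a b m x t].
pose c := `|t - m| * `|p t|.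
transitivity (\int[leb]_x ((cst c%:E) \_ S) x)%E.
  apply: eq_integral => x _; rewrite /Kf patchE /Pf tI /=.
  by rewrite (_ : (x \in S) = cond a b m x t) //; apply/idP/idP; [move/set_mem|move/mem_set].
rewrite -integral_mkcond integral_cst; last exact: mSt.
have [at_ tb] := set_mem tI.
have [tm|mt] := ltP t m.
- rewrite [X in (_ * X)%E](_ : _ = (m - t)%:E); last first.
    apply: (@leb_sandwich R t m S (ltW tm) (mSt a b m t)).
    + move=> x /=; rewrite in_itv /= => /andP[tx xm].
      rewrite /S /cond /=; apply/and3P; split; last 2 first.
      * exact: tI.
      * by rewrite tx xm.
      apply/mem_set; split.
      * by apply: (lt_trans at_); rewrite lte_fin.
      * by apply: (lt_le_trans _ mb); rewrite lte_fin.
    + move=> x; rewrite /S /= /cond => /and3P[_ _ /orP[/andP[tx xm]|/andP[mx xt]]].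
      * by rewrite in_itv /= !ltW.
      * by have := le_lt_trans (le_trans mx xt) tm; rewrite ltxx.
  rewrite -EFinM /c ltr0_norm ?subr_lt0 // opprB; congr EFin.
  by ring.
- rewrite [X in (_ * X)%E](_ : _ = (t - m)%:E); last first.
    apply: (@leb_sandwich R m t S mt (mSt a b m t)).
    + move=> x /=; rewrite in_itv /= => /andP[mx xt].
      rewrite /S /cond /=; apply/and3P; split; last 2 first.
      * exact: tI.
      * by rewrite (ltW mx) (ltW xt) orbT.
      apply/mem_set; split.
      * by apply: (le_lt_trans am); rewrite lte_fin.
      * by apply: (lt_trans _ tb); rewrite lte_fin.
    + move=> x; rewrite /S /= /cond => /and3P[_ _ /orP[/andP[tx xm]|/andP[mx xt]]].
      * by have := lt_le_trans (lt_trans tx xm) mt; rewrite ltxx.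
      * by rewrite in_itv /= mx xt.
  rewrite -EFinM /c ger0_norm ?subr_ge0 //; congr EFin.
  by ring.
Qed.

Lemma negfine (R : realType) (y : \bar R) : y \is a fin_num -> y = (- fine (- y))%:E.
Proof. by move=> /fineK <-; rewrite -EFinN /= opprK. Qed.

Lemma sum0_opp (R : realType) (y z : \bar R) :
  (y + z = 0)%E -> z \is a fin_num -> y = (- z)%E.
Proof.
move=> h /fineK zE; rewrite -zE in h *.
case: y h => [s| |] //= h.
by congr EFin; move: h => [] /eqP; rewrite addr_eq0 => /eqP.
Qed.

Lemma inner_t (R : realType) (a b : \bar R) (p : R -> R) (x : R) :
  density a b p -> L2p a b p id -> oitv a b x ->
  (\int[leb]_t Kf a b p (Ep a b p id) (x, t) =
   (- fine (\int[leb]_(t in oitv a x%:E) ((id t - Ep a b p id) * p t)%:E))%:E)%E.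
Proof.
move=> hd h2 xI; have [_ Hp _] := hd.
set m := Ep a b p id.
have mI := moitv a b; have mp := dens_mp hd.
have hint := shift_int m hd h2.
have habs : leb.-integrable (oitv a b) (fun t => (`|t - m| * `|p t|)%:E).
  move: (integrable_norm hint); apply: (eq_integrable mI) => t _ /=.
  by rewrite normrM normr_id.
have [ax xb] := xI.
have xIb : x \in oitv a b by apply/mem_set.
pose A := oitv a x%:E.
have mA : measurable A := moitv a x%:E.
have AI : A `<=` oitv a b.
  by move=> t [at_ tx]; split => //; apply: (lt_trans tx).
have eA : (\int[leb]_(t in A) ((id t - m) * p t)%:E =
           \int[leb]_(t in A) ((t - m) * `|p t|)%:E)%E.
  apply: (@ae_abs R a b p (fun t => t - m) A mA AI) => //.
    apply: measurable_funB => //.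
  exact: measurable_funS mp.
have [xm|mx] := ltP x m.
- set J := (\int[leb]_(t in A) (`|t - m| * `|p t|)%:E)%E.
  have J0 : (0 <= J)%E by apply: integral_ge0 => t _; rewrite lee_fin mulr_ge0.
  have Jfin : J \is a fin_num.
    by apply: integrable_fin_num => //; exact: integrableS habs.
  transitivity J.
    rewrite /J [in RHS]integral_mkcond; apply: eq_integral => t _.
    rewrite /Kf patchE /=.
    case: (boolP (t \in A)) => tA.
    + have tI : oitv a b t by apply: AI; exact: set_mem.
      have [_ tx] := set_mem tA.
      rewrite lte_fin in tx.
      have -> : cond a b m x t.
        by apply/and3P; split; [exact: xIb | exact/mem_set | rewrite tx xm].
      by rewrite /Pf mem_set.
    + have -> // : cond a b m x t = false.
      apply/negP => /and3P[_ /set_mem tI /orP[/andP[tx _]|/andP[mx _]]].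
      * by move/negP: tA; apply; apply/mem_set; split; [case: tI | rewrite lte_fin].
      * by have := lt_le_trans xm mx; rewrite ltxx.
  rewrite eA.
  have -> : (\int[leb]_(t in A) ((t - m) * `|p t|)%:E =
             \int[leb]_(t in A) (- (`|t - m| * `|p t|)%:E))%E.
    apply: eq_integral => t /set_mem [_ tx]; rewrite lte_fin in tx.
    have tm : t - m < 0 by rewrite subr_lt0 (lt_trans tx xm).
    by rewrite -EFinN -mulNr (ltr0_norm tm) opprK.
  rewrite integral_ge0N => [|t _]; last by rewrite lee_fin mulr_ge0.
  exact: (negfine Jfin).
- pose B := oitv a b `&` `[x, +oo[%classic.
  have mB : measurable B by apply: measurableI => //.
  have BI : B `<=` oitv a b by move=> t [].
  have AB : oitv a b = A `|` B.
    apply/seteqP; split => t.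
    + move=> tI; have [tx|xt] := ltP t x.
      * by left; split; [case: tI | rewrite lte_fin].
      * by right; split => //=; rewrite in_itv /= xt.
    + by case => [/AI|/BI].
  have dAB : [disjoint A & B].
    rewrite disj_set2E; apply/eqP/seteqP; split => // t [[_ tx] [_]] /=.
    by rewrite in_itv /= andbT lte_fin in tx * => xt; have := lt_le_trans tx xt; rewrite ltxx.
  set J2 := (\int[leb]_(t in B) ((t - m) * `|p t|)%:E)%E.
  have J2fin : J2 \is a fin_num.
    by apply: integrable_fin_num => //; exact: integrableS hint.
  transitivity J2.
    rewrite /J2 [in RHS]integral_mkcond; apply: eq_integral => t _.
    rewrite /Kf patchE /=.
    case: (boolP (t \in B)) => tB.
    + have [tI] := set_mem tB; rewrite /= in_itv /= andbT => xt.
      have -> : cond a b m x t.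
        by apply/and3P; split; [exact: xIb | exact/mem_set | rewrite mx xt orbT].
      by rewrite /Pf mem_set // ger0_norm // subr_ge0 (le_trans mx xt).
    + have -> // : cond a b m x t = false.
      apply/negP => /and3P[_ /set_mem tI /orP[/andP[_ xm]|/andP[_ xt]]].
      * by have := lt_le_trans xm mx; rewrite ltxx.
      * by move/negP: tB; apply; apply/mem_set; split => //=; rewrite in_itv /= xt.
  have hsum : (\int[leb]_(t in A) ((t - m) * `|p t|)%:E + J2 = 0)%E.
    rewrite /J2 -integral_setU //; last by rewrite -AB; case/integrableP: hint.
    by rewrite -AB shiftE // subrr.
  rewrite eA (sum0_opp hsum J2fin).
  exact: (negfine J2fin).
Qed.

Lemma mFint (R : realType) (a b : \bar R) (p : R -> R) (m : R) :
  density a b p ->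
  measurable_fun [set: measurableTypeR R] (fun x => \int[leb]_t Kf a b p m (x, t))%E.
Proof.
move=> hd.
exact: (@measurable_fun_fubini_tonelli_F _ _ _ _ _ leb (Kf a b p m) (mKf m hd) (@Kf_ge0 R a b p m)).
Qed.

Lemma part1 (R : realType) (a b : \bar R) (p : R -> R) :
  (a < b)%E -> density a b p -> L2p a b p id ->
  Varp a b p id = L1norm a b p (fun x => - Ttilde a b p id x).
Proof.
move=> ab hd h2; have [_ Hp _] := hd.
have mI := moitv a b; have mp := dens_mp hd.
have hin := fun x => @inner_t R a b p x hd h2.
have mab := mean_in ab hd h2.
set m := Ep a b p id in hin mab *.
set F := fun x => fine (\int[leb]_(t in oitv a x%:E) ((id t - m) * p t)%:E)%E.
have hin' : forall x, oitv a b x -> (\int[leb]_t Kf a b p m (x, t) = (- F x)%:E)%E.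
  by move=> x xI; rewrite hin.
have F0 : forall x, oitv a b x -> 0 <= - F x.
  by move=> x xI; rewrite -lee_fin -hin' //; apply: integral_ge0 => t _; exact: Kf_ge0.
have mG := mFint m hd.
have step1 : Varp a b p id = (\int[leb]_(x in oitv a b) (- F x)%:E)%E.
  rewrite /Varp -/m (@ae_abs R a b p (fun x => (id x - m) ^+ 2) (oitv a b)) //; last first.
    by apply: measurable_funX; apply: measurable_funB.
  rewrite integral_mkcond.
  transitivity (\int[leb]_t \int[leb]_x Kf a b p m (x, t))%E.
    apply: eq_integral => t _; rewrite patchE inner_x //.
  rewrite -Kf_tonelli // [in RHS]integral_mkcond; apply: eq_integral => x _; rewrite patchE.
  case: (boolP (x \in oitv a b)) => xI.
    by rewrite hin' //; exact: set_mem.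
  rewrite -[RHS](integral0 leb setT); apply: eq_integral => t _.
  by rewrite /Kf /cond (negbTE xI).
have mFE : measurable_fun (oitv a b) (fun x => (- F x)%:E).
  apply: (eq_measurable_fun (fun x => \int[leb]_t Kf a b p m (x, t))%E).
    by move=> x /set_mem xI; exact: hin'.
  exact: measurable_funS mG.
have mF : measurable_fun (oitv a b) F.
  apply: (eq_measurable_fun (fun x => - fine (\int[leb]_t Kf a b p m (x, t))%E)).
    by move=> x /set_mem xI; rewrite hin' //= opprK.
  apply: measurable_funN; apply: measurable_funS (measurableT_comp _ mG) => //.
have mT : measurable_fun (oitv a b) (fun x => (`|- Ttilde a b p id x| * p x)%:E).
  apply: (eq_measurable_fun (fun x => (`|- ((p x)^-1 * F x)| * p x)%:E)).
    by move=> x _; rewrite /Ttilde.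
  apply/measurable_EFinP; apply: measurable_funM => //.
  apply: measurableT_comp => //; apply: measurable_funN; apply: measurable_funM => //.
  have mi := measurableT_comp (@measurable_inv R) mp.
  exact mi.
rewrite step1 /L1norm; apply: ae_eq_integral => //.
- apply: (@filterS _ _ (@ae_filter_ringOfSetsType _ _ _ (@lebesgue_measure R)) _ _ _ Hp).
  move=> x Hx xI; have px := Hx xI.
  rewrite /Ttilde -/m -/(F x) normrN normrM gtr0_norm ?invr_gt0 //.
  rewrite ler0_norm; last by rewrite -oppr_ge0; exact: F0.
  by rewrite mulrAC mulVf ?mul1r // gt_eqF.
Qed.

Lemma leb_cc_lt (R : realType) (x y : R) :
  (leb (`[x, y]%classic : set (measurableTypeR R)) < +oo)%E.
Proof. by rewrite lebesgue_measure_itv; case: ifP => _ //; rewrite ltry. Qed.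

Lemma leb_cc_eq (R : realType) (x y : R) : x <= y ->
  leb (`[x, y]%classic : set (measurableTypeR R)) = (y - x)%:E.
Proof.
move=> xy; rewrite lebesgue_measure_itv /= lte_fin.
move: xy; rewrite le_eqVlt => /predU1P[->|xy]; first by rewrite ltxx subrr.
by rewrite xy EFinB.
Qed.

Lemma part2 (R : realType) (a b : \bar R) (p w : R -> R) :
  density a b p -> L2p a b p id -> weight a b p w -> Cpw a b p w = 1%E ->
  (Varp a b p id <= L1norm a b p w)%E.
Proof.
move=> hd h2 [[mw _] Hw [mpw _]] HC.
have [_ Hp _] := hd.
have mI := moitv a b; have mp := dens_mp hd.
have Hpw : {ae leb, forall x, oitv a b x -> 0 < p x /\ 0 < w x}.
  apply: (@filterS2 _ _ (@ae_filter_ringOfSetsType _ _ _ (@lebesgue_measure R)) _ _ _ _ Hp Hw).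
  by move=> x h1 h3 xI; split; [exact: h1 | exact: h3].
have mE : measurable_fun (oitv a b) (fun x => (`|w x| * `|p x|)%:E).
  apply/measurable_EFinP; apply: measurable_funM; exact: measurableT_comp.
have eqL : forall f : R -> R, measurable_fun (oitv a b) f ->
    (forall x, 0 < p x -> 0 < w x -> f x = `|w x| * `|p x|) ->
    (\int[leb]_(x in oitv a b) (f x)%:E =
     \int[leb]_(x in oitv a b) (`|w x| * `|p x|)%:E)%E.
  move=> f mf hf; apply: ae_eq_integral => //; first exact/measurable_EFinP.
  apply: (@filterS _ _ (@ae_filter_ringOfSetsType _ _ _ (@lebesgue_measure R)) _ _ _ Hpw).
  by move=> x h xI; have [px wx] := h xI; rewrite hf.
set L := (\int[leb]_(x in oitv a b) (`|w x| * `|p x|)%:E)%E.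
have -> : L1norm a b p w = L.
  rewrite /L1norm; apply: eqL.
    by apply: measurable_funM => //; exact: measurableT_comp.
  by move=> x px wx; rewrite (gtr0_norm px).
have L0 : (0 <= L)%E by apply: integral_ge0 => x _; rewrite lee_fin mulr_ge0.
have [->|Loo] := eqVneq L +oo%E; first exact: leey.
have Lfin : L \is a fin_num by rewrite ge0_fin_numE // ltey.
set l := fine L.
have LE : L = l%:E by rewrite fineK.
have l0 : 0 <= l by rewrite -lee_fin -LE.
clearbody l.
have hH1 : H1 a b p w id (fun=> 1).
  split => //.
  - split; first exact: measurable_cst.
    move=> x y _ _; apply/integrableP; split; first exact: measurable_cst.
    rewrite (_ : (fun t => _) = cst 1%E); last by apply/funext => t; rewrite abse1.
    rewrite integral_cst // mul1e; exact: leb_cc_lt.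
  - move=> x y _ _ xy; rewrite Rintegral_cst // mul1r.
    apply: (@eq_trans _ _ (fine ((y - x)%:E))) => //; congr fine.
    exact/esym/leb_cc_eq.
  - rewrite (eqL (fun x => 1 ^+ 2 * (p x * w x))).
    + by rewrite ltey; exact: Loo.
    + by apply: measurable_funM => //; exact: measurable_cst.
    + by move=> x px wx; rewrite expr1n mul1r mulrC (gtr0_norm px) (gtr0_norm wx).
have hD : Dirichlet a b p w (fun=> 1) = L.
  rewrite /Dirichlet; apply: eqL.
    apply: measurable_funM => //; apply: measurable_funM => //; exact: measurable_cst.
  by move=> x px wx; rewrite normr1 expr1n mul1r (gtr0_norm px) (gtr0_norm wx).
move: HC; rewrite /Cpw.
set S := [set C : \bar R | _] => HC.
have hDl : Dirichlet a b p w (fun=> 1) = l%:E by rewrite hD; exact: LE.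
have hS : forall C, S C -> (Varp a b p id <= C * l%:E)%E.
  by move=> C [_ hC]; rewrite -hDl; exact: hC.
suff : (Varp a b p id <= l%:E)%E by rewrite LE.
have S0 : forall C, S C -> (0 <= C)%E by move=> C [].
case Hv : (Varp a b p id) => [r| |]; last exact: leNye.
- have [l0'|lpos] := eqVneq l 0.
  + have : S !=set0.
      apply/set0P; apply/negP => /eqP S0'.
      by move: HC; rewrite S0' ereal_inf0.
    case=> C SC; have := hS C SC; rewrite Hv; subst l; by rewrite mule0.
  + have lp : 0 < l by rewrite lt_neqAle eq_sym lpos l0.
    have : ((r / l)%:E <= ereal_inf S)%E.
      apply: le_ereal_inf_tmp => C SC; have := hS C SC; rewrite Hv.
      case: C SC => [c| |] SC h.
      * by rewrite lee_fin ler_pdivrMr // -lee_fin.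
      * exact: leey.
      * by have := S0 _ SC.
    by rewrite HC lee_fin ler_pdivrMr // mul1r lee_fin.
- exfalso.
  have : (+oo <= ereal_inf S)%E.
    apply: le_ereal_inf_tmp => C SC; have := hS C SC; rewrite Hv.
    case: C SC => [c| |] SC h //.
    by have := S0 _ SC.
  by rewrite HC.
Qed.

Unset Implicit Arguments.

Theorem corollary2p5 (R : realType) (a b : \bar R) (p : R -> R) :
  (a < b)%E ->
  density a b p ->
  L2p a b p id ->
  let tau := fun x => - Ttilde a b p id x in
  Varp a b p id = L1norm a b p tau /\
  (forall w : R -> R, weight a b p w -> Cpw a b p w = 1%E ->
     (Varp a b p id <= L1norm a b p w)%E).
Proof.
move=> ab hd h2 tau; split.
- exact: part1.
- move=> w hw hC; exact: part2.
Qed.
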